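(* Let $T$ be a power-bounded continuous linear operator on a Fréchet space $X$ with a translation-invariant metric $d$ inducing its topology. (1) If $T$ is recurrent, then $T$ is invertible, $T^{-1}$ is power-bounded and recurrent, and $T$ is an isometry for the metric $d_T^*(x,y)=\sup_{\ell\ge0}d(T^\ell x,T^\ell y)$. (2) If $T$ is hyper-recurrent, then $\mathrm{Hr}(T)=\mathrm{Hr}(T^{-1})$ and $T^{-1}$ is hyper-recurrent.
   Context: $T$ is power-bounded if every orbit $\{T^nx:n\in\mathbb{N}\}$ is bounded in the topological vector space sense (for every neighbourhood $U$ of $0$ there is $r>0$ with the orbit contained in $zU$ whenever $|z|\ge r$). $x$ is recurrent if $T^{\omega_n}x\to x$ for some strictly increasing sequence $(\omega_n)$ of positive integers; $\mathrm{Rec}(T)$ is the set of recurrent vectors and $T$ is recurrent if $\mathrm{Rec}(T)$ is dense. $\mathfrak{C}$ is the set of strictly increasing sequences $\omega$ with $T^{\omega_n}x\to x$ for some $x\ne0$; $\mathfrak{L}(\omega)=\{x:T^{\omega_n}x\to x\}$. $\mathrm{Hr}(T)$ is the set of $x\in\mathrm{Rec}(T)$ such that $\mathfrak{L}(\omega)$ is dense for every $\omega\in\mathfrak{C}$ with $x\in\mathfrak{L}(\omega)$; a recurrent $T$ is hyper-recurrent if $\mathrm{Hr}(T)\ne\emptyset$. The same notions are used for $T^{-1}$. *)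

(* Defs.v *)
From HB Require Import structures.
From mathcomp Require Import all_boot all_order all_algebra.
From mathcomp Require Import all_classical all_reals all_analysis.
Set Implicit Arguments. Unset Strict Implicit. Unset Printing Implicit Defensive.
Import Order.TTheory GRing.Theory Num.Theory.
Local Open Scope classical_set_scope.
Local Open Scope ring_scope.

Section defs.
Context (K : numFieldType) (X : tvsType K).

Definition orbit_bounded (f : X -> X) (x : X) : Prop :=
  forall U : set X, nbhs (0 : X) U ->
    exists2 r : K, 0 < r & forall z : K, r <= `|z| ->
      forall n : nat, exists2 u, U u & iter n f x = z *: u.

Definition power_bounded (f : X -> X) : Prop := forall x, orbit_bounded f x.

Definition incr_pos (w : nat -> nat) : Prop :=
  (0 < w 0)%N /\ forall n, (w n < w n.+1)%N.

Definition frakL (f : X -> X) (w : nat -> nat) : set X :=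
  [set x | (fun n => iter (w n) f x) @ \oo --> x].

Definition Rec (f : X -> X) : set X :=
  [set x | exists w, incr_pos w /\ frakL f w x].

Definition recurrent (f : X -> X) : Prop := dense (Rec f).

Definition frakC (f : X -> X) : set (nat -> nat) :=
  [set w | incr_pos w /\ exists x, x <> 0 /\ frakL f w x].

Definition Hr (f : X -> X) : set X :=
  [set x | Rec f x /\
     forall w, frakC f w -> frakL f w x -> dense (frakL f w)].

Definition hyper_recurrent (f : X -> X) : Prop :=
  recurrent f /\ Hr f !=set0.
End defs.

Section metric.
Context (R : realType) (X : Type).

Definition dstar (d : X -> X -> R) (f : X -> X) (x y : X) : \bar R :=
  ereal_sup (range (fun l : nat => (d (iter l f x) (iter l f y))%:E)).
End metric.

(* the scalar field is complete (together with archimedean: K is R or C) *)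
Definition complete_field (K : numFieldType) : Prop :=
  forall u : nat -> K^o, cauchy (u @ \oo) -> cvg (u @ \oo).

(* Main.v *)
From HB Require Import structures.
From mathcomp Require Import all_boot all_order all_algebra.
From mathcomp Require Import all_classical all_reals all_analysis.
From mathcomp Require Import lra.
Require Import Defs.
Import Order.TTheory GRing.Theory Num.Theory.
Local Open Scope classical_set_scope.
Local Open Scope ring_scope.
Local Close Scope term_scope.

Section Main.
Context (R : realType) (K : archiNumFieldType)
  (X : tvsType K) (d : X -> X -> R)
  (d_ge0 : forall x y, 0 <= d x y)
  (d_eq0 : forall x y, d x y = 0 <-> x = y)
  (d_sym : forall x y, d x y = d y x)
  (d_tri : forall x y z, d x z <= d x y + d y z)
  (d_inv : forall x y z, d (x + z) (y + z) = d x y)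
  (d_top : forall (x : X) (U : set X),
     nbhs x U <-> exists2 e : R, 0 < e & [set y | d x y < e] `<=` U)
  (d_complete : forall u : nat -> X,
     (forall e : R, 0 < e -> exists N : nat, forall m n : nat,
        (N <= m)%N -> (N <= n)%N -> d (u m) (u n) < e) ->
     exists l : X, u @ \oo --> l).

Lemma dE x y : d x y = d (x - y) 0.
Proof. by rewrite -(d_inv (x - y) 0 y) subrK add0r. Qed.

Lemma cvgdP (u : nat -> X) l : u @ \oo --> l <->
  forall e, 0 < e -> exists N, forall n, (N <= n)%N -> d l (u n) < e.
Proof.
split.
- move=> ul e e0.
  have : nbhs l [set y | d l y < e] by apply/d_top; exists e.
  move=> /ul [N _ HN]; exists N => n Nn; exact: HN.
- move=> H U /d_top [e e0 sub]; have [N HN] := H e e0.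
  exists N => // n Nn; apply: sub; exact: HN.
Qed.

Lemma contdP (f : X -> X) x : {for x, continuous f} <->
  forall e, 0 < e -> exists2 r, 0 < r & forall y, d x y < r -> d (f x) (f y) < e.
Proof.
split.
- move=> fc e e0.
  have : nbhs (f x) [set y | d (f x) y < e] by apply/d_top; exists e.
  move=> /fc /d_top [r r0 sub]; exists r => // y /sub; exact.
- move=> H U /d_top [e e0 sub]; have [r r0 Hr] := H e e0.
  apply/d_top; exists r => // y /Hr; exact: sub.
Qed.

Lemma open_ball z r : open [set y | d z y < r].
Proof.
rewrite openE => y /= hy; apply/d_top; exists (r - d z y); first by rewrite subr_gt0.
move=> w /= hw; apply: (le_lt_trans (d_tri z y w)).
by rewrite -ltrBrDl.
Qed.

Lemma denseP (A : set X) : dense A ->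
  forall z r, 0 < r -> exists a, A a /\ d z a < r.
Proof.
move=> dA z r r0.
have [|a [/= za Aa]] := dA [set y | d z y < r] _ (open_ball z r).
  by exists z => /=; rewrite (proj2 (d_eq0 z z) erefl).
by exists a.
Qed.

Lemma denseI (A : set X) : (forall z r, 0 < r -> exists a, A a /\ d z a < r) -> dense A.
Proof.
move=> H O [z Oz] /[dup] oO; rewrite openE => /(_ z Oz) /d_top [e e0 sub].
have [a [Aa za]] := H z e e0; exists a; split => //; exact: sub.
Qed.

Lemma d_refl x : d x x = 0.
Proof. exact/(proj2 (d_eq0 x x)). Qed.

Lemma small_inv (e : R) : 0 < e -> exists N : nat, forall n, (N <= n)%N -> (n.+1%:R)^-1 < e.
Proof.
move=> e0; exists (Num.Def.archi_bound e^-1) => n Nn.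
have h : e^-1 < (Num.Def.archi_bound e^-1)%:R by apply: archi_boundP; rewrite invr_ge0 ltW.
rewrite -[e]invrK ltf_pV2 ?posrE ?invr_gt0 ?ltr0Sn //.
apply: (lt_le_trans h); rewrite ler_nat; exact: leqW.
Qed.

Lemma closed_compl (F : set X) :
  (forall (u : nat -> X) l, (forall n, F (u n)) ->
     (forall e, 0 < e -> exists N, forall n, (N <= n)%N -> d l (u n) < e) -> F l) ->
  forall y, ~ F y -> exists2 s, 0 < s & forall z, d y z < s -> ~ F z.
Proof.
move=> Fc y nFy; apply: contrapT => nE.
have H : forall m : nat, exists z, d y z < (m.+1%:R)^-1 /\ F z.
  move=> m; apply: contrapT => nz; apply: nE; exists (m.+1%:R)^-1.
    by rewrite invr_gt0 ltr0Sn.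
  by move=> z hz Fz; apply: nz; exists z.
have [u Hu] := choice H; apply: nFy; apply: (Fc u) => [n|e e0]; first by case: (Hu n).
have [N HN] := small_inv _ e0; exists N => n Nn.
by apply: lt_trans (HN n Nn); case: (Hu n).
Qed.

Lemma baire (F : nat -> set X) :
  (forall k (u : nat -> X) l, (forall n, F k (u n)) ->
     (forall e, 0 < e -> exists N, forall n, (N <= n)%N -> d l (u n) < e) -> F k l) ->
  (forall x, exists k, F k x) ->
  exists k x0 r, 0 < r /\ forall y, d x0 y < r -> F k y.
Proof.
move=> Fc Fcov; apply: contrapT => nP.
have H1 : forall k x0 r, 0 < r -> exists y, d x0 y < r /\ ~ F k y.
  move=> k x0 r r0; apply: contrapT => nE; apply: nP; exists k, x0, r; split => // y hy.
  by apply: contrapT => nF; apply: nE; exists y.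
have step : forall kp : nat * (X * R), exists q : X * R, 0 < kp.2.2 ->
   [/\ 0 < q.2, d kp.2.1 q.1 + q.2 <= kp.2.2 / 2, q.2 <= (kp.1.+1%:R)^-1
     & forall z, d q.1 z < 2 * q.2 -> ~ F kp.1 z].
  move=> [k [x r]] /=; case: (pselect (0 < r)) => r0; last by exists (x, r).
  have r4 : 0 < r / 4 by rewrite divr_gt0.
  have [y [xy nFy]] := H1 k x (r/4) r4.
  have [s s0 Hs] := @closed_compl (F k) (Fc k) _ nFy.
  pose q := Num.min (s / 2) (Num.min (r / 4) (k.+1%:R)^-1).
  have q0 : 0 < q by rewrite !lt_min divr_gt0 //= r4 invr_gt0 ltr0Sn.
  have q1 : q <= s / 2 by rewrite ge_min lexx.
  have q2 : q <= r / 4 by rewrite !ge_min lexx orbT.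
  have q3 : q <= (k.+1%:R)^-1 by rewrite !ge_min lexx !orbT.
  exists (y, q) => _ /=; split => //.
  - by apply: le_trans (lerD (ltW xy) q2) _; lra.
  - move=> z hz; apply: Hs; apply: lt_le_trans hz _.
    by rewrite -(ler_pM2l (_ : 0 < 2^-1)) ?invr_gt0 // mulrA mulVf // mul1r mulrC.
have [g Hg] := choice step.
pose s := fix s (n : nat) : X * R := if n is m.+1 then g (m, s m) else (0, 1).
have sS : forall n, s n.+1 = g (n, s n) by [].
have pos : forall n, 0 < (s n).2.
  by elim => [|n IH]; [exact: ltr01 | rewrite sS; case: (Hg (n, s n) IH)].
have stepn n := Hg (n, s n) (pos n).
have inv : forall k j, d (s k).1 (s (k + j)%N).1 + (s (k + j)%N).2 <= (s k).2.
  move=> k; elim => [|j IH]; first by rewrite addn0 d_refl add0r.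
  rewrite addnS sS; case: (stepn (k + j)%N) => /= _ h _ _.
  move: (d_tri (s k).1 (s (k + j)%N).1 (g ((k + j)%N, s (k + j)%N)).1) h IH (pos (k + j)%N).
  lra.
have dle : forall k m, (k <= m)%N -> d (s k).1 (s m).1 <= (s k).2.
  move=> k m km; have := inv k (m - k)%N; rewrite subnKC //.
  have := pos m; lra.
have rho_le : forall n, (s n.+1).2 <= (n.+1%:R)^-1.
  by move=> n; rewrite sS; case: (stepn n).
have [l hl] : exists l : X, (fun n => (s n).1) @ \oo --> l.
  apply: (d_complete (fun n => (s n).1)) => e e0.
  have [N HN] := small_inv _ (divr_gt0 e0 (ltr0Sn R 1)).
  exists N.+1 => m n Nm Nn.
  apply: le_lt_trans (d_tri _ (s N.+1).1 _) _; rewrite d_sym.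
  apply: le_lt_trans (lerD (dle _ _ Nm) (dle _ _ Nn)) _.
  rewrite [e]splitr; apply: ltrD; apply: le_lt_trans (rho_le N) (HN N (leqnn N)).
move/cvgdP: hl => hl.
have lim_le : forall j, d (s j).1 l <= (s j).2.
  move=> j; apply/ler_addgt0Pr => ep ep0.
  have [N HN] := hl ep ep0.
  apply: le_trans (d_tri _ (s (maxn j N)).1 _) _.
  by apply: lerD; [apply: dle; rewrite leq_maxl | rewrite d_sym; apply/ltW/HN; rewrite leq_maxr].
have [k Fk] := Fcov l.
case: (stepn k) => /= p0 _ _ nF; apply: (nF l) => //.
rewrite -sS; apply: le_lt_trans (lim_le k.+1) _.
by rewrite -[X in X < _]mul1r ltr_pM2r // ltr1n.
Qed.

Definition Dc (f : X -> X) := forall x e, 0 < e ->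
  exists2 r, 0 < r & forall y, d x y < r -> d (f x) (f y) < e.

Lemma Dc_comp f g : Dc f -> Dc g -> Dc (f \o g).
Proof.
move=> cf cg x e e0; have [r r0 Hr] := cf (g x) e e0.
have [s s0 Hs] := cg x r r0; exists s => // y /Hs; exact: Hr.
Qed.

Lemma Dc_iter f n : Dc f -> Dc (iter n f).
Proof.
move=> cf; elim: n => [|n IH] x e e0 /=; first by exists e.
have [r r0 Hr] := @Dc_comp _ _ cf IH x e e0; exists r => // y /Hr.
Qed.

Lemma Dc_lin f : (forall a b, f (a - b) = f a - f b) ->
  (forall e, 0 < e -> exists2 r, 0 < r & forall u, d u 0 < r -> d (f u) 0 < e) -> Dc f.
Proof.
move=> fB H x e e0; have [r r0 Hr] := H e e0; exists r => // y xy.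
by rewrite dE -fB; apply: Hr; rewrite -dE.
Qed.

Lemma scale_cont0 (c : K) : c != 0 ->
  forall e, 0 < e -> exists2 r, 0 < r & forall u, d u 0 < r -> d (c *: u) 0 < e.
Proof.
move=> c0 e e0.
have : nbhs (0 : X) [set y | d 0 y < e] by apply/d_top; exists e.
move=> /(nbhs0Z (invr_neq0 c0)) /d_top [r r0 sub]; exists r => // u hu.
have /sub [b /= b0 <-] : [set y | d 0 y < r] u by rewrite /= d_sym.
by rewrite scalerA divff // scale1r d_sym.
Qed.

Lemma Dc_scale (c : K) : Dc ( *:%R c).
Proof.
have [->|c0] := eqVneq c 0.
  move=> x e e0; exists e => // y _ /=; rewrite !scale0r d_refl //.
by apply: Dc_lin => [a b|]; [rewrite scalerBr | exact: scale_cont0].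
Qed.

Lemma iter_add (f : X -> X) : (forall a b, f (a + b) = f a + f b) ->
  forall n a b, iter n f (a + b) = iter n f a + iter n f b.
Proof. by move=> fD; elim => [//|n IH] a b /=; rewrite IH fD. Qed.

Lemma iter_sub (f : X -> X) : (forall a b, f (a - b) = f a - f b) ->
  forall n a b, iter n f (a - b) = iter n f a - iter n f b.
Proof. by move=> fB; elim => [//|n IH] a b /=; rewrite IH fB. Qed.

Lemma iter_scale (f : X -> X) : (forall (c : K) a, f (c *: a) = c *: f a) ->
  forall n (c : K) a, iter n f (c *: a) = c *: iter n f a.
Proof. by move=> fZ; elim => [//|n IH] c a /=; rewrite IH fZ. Qed.

Lemma d_add0 u v : d (u + v) 0 <= d u 0 + d v 0.
Proof.
apply: le_trans (d_tri _ v _) _; have := d_inv u 0 v; rewrite add0r => ->.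
by rewrite lerD2l.
Qed.

Lemma d_nat u n : d (u *+ n) 0 <= n%:R * d u 0.
Proof.
elim: n => [|n IH]; first by rewrite mulr0n d_refl mul0r.
rewrite mulrS -nat1r mulrDl mul1r; apply: le_trans (d_add0 _ _) _; exact: lerD.
Qed.

Lemma d_eps a b : (forall e, 0 < e -> d a b < e) -> a = b.
Proof.
move=> H; apply/d_eq0/le_anti; rewrite d_ge0 andbT.
by apply/ler_addgt0Pr => e e0; rewrite add0r ltW // H.
Qed.
Arguments iter_add {f}. Arguments iter_sub {f}. Arguments iter_scale {f}.
Arguments Dc_comp {f g}. Arguments Dc_iter {f}. Arguments Dc_lin {f}.

Context (T : {linear X -> X}) (T_cont : continuous T) (T_pb : power_bounded T).

Lemma TB a b : T (a - b) = T a - T b. Proof. exact: linearB. Qed.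
Lemma TD a b : T (a + b) = T a + T b. Proof. exact: linearD. Qed.
Lemma TZ (c : K) a : T (c *: a) = c *: T a. Proof. exact: linearZ. Qed.

Lemma Dc_T : Dc T.
Proof. by move=> x; apply/contdP/T_cont. Qed.

Lemma EC_T e : 0 < e ->
  exists2 r, 0 < r & forall u, d u 0 < r -> forall n, d (iter n T u) 0 <= e.
Proof.
move=> e0; have e2 : 0 < e / 2 by rewrite divr_gt0.
pose F k x := forall n, d (iter n T ((k.+1%:R : K)^-1 *: x)) 0 <= e / 2.
have Fc : forall k (u : nat -> X) l, (forall n, F k (u n)) ->
     (forall e, 0 < e -> exists N, forall n, (N <= n)%N -> d l (u n) < e) -> F k l.
  move=> k u l Fu ul n; apply/ler_addgt0Pr => ep ep0.
  have [r r0 Hr] := @Dc_comp _ _ (@Dc_iter _ n Dc_T) (Dc_scale (k.+1%:R)^-1) l ep ep0.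
  have [N HN] := ul r r0.
  apply: le_trans (d_tri _ (iter n T ((k.+1%:R : K)^-1 *: u N)) _) _.
  rewrite addrC; apply: lerD; first exact: Fu.
  exact/ltW/(Hr (u N))/HN.
have Fcov : forall x, exists k, F k x.
  move=> x.
  have U0 : nbhs (0 : X) [set y | d 0 y < e / 2] by apply/d_top; exists (e / 2).
  have [r r0 Hr] := T_pb x _ U0.
  exists (Num.Def.archi_bound r) => n.
  have hr : r <= `|(Num.Def.archi_bound r).+1%:R : K|.
    rewrite normr_nat; apply/ltW/(lt_le_trans (archi_boundP (ltW r0))).
    by rewrite ler_nat.
  have [u /= u0 hx] := Hr _ hr n.
  by rewrite (iter_scale TZ) hx scalerA mulVf ?pnatr_eq0 // scale1r d_sym ltW.
have [k [x0 [r [r0 Hr]]]] := @baire F Fc Fcov.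
exists (r / k.+1%:R); first by rewrite divr_gt0.
move=> u hu n.
have hy : d ((k.+1%:R : K) *: u) 0 < r.
  rewrite scaler_nat; apply: le_lt_trans (d_nat u k.+1) _.
  by move: hu; rewrite ltr_pdivlMr ?ltr0Sn // mulrC.
have F1 : F k (k.+1%:R *: u + x0) by apply: Hr; rewrite -{1}[x0]add0r d_inv d_sym.
have F0 : F k x0 by apply: Hr; rewrite d_refl.
have := F1 n; have := F0 n.
rewrite scalerDr scalerA mulVf ?pnatr_eq0 // scale1r (iter_add TD).
set A := iter n T (_ *: x0); set B := iter n T u => hA hBA.
have := d_inv B 0 A; rewrite add0r => <-.
apply: le_trans (d_tri _ 0 _) _; rewrite (d_sym 0 A); move: hA hBA; lra.
Qed.

Lemma incr_ge w : incr_pos w -> forall n, (n <= w n)%N.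
Proof. by case=> _ hw; elim => [//|n IH]; apply: leq_ltn_trans IH (hw n). Qed.

Section Rec.
Context (Trec : recurrent T).

Lemma key z e m : 0 < e -> exists l, (m <= l)%N /\ d z 0 <= d (iter l T z) 0 + e.
Proof.
move=> e0; have e3 : 0 < e / 3 by rewrite divr_gt0.
have [r r0 Hr] := EC_T _ e3.
have m0 : 0 < Num.min r (e / 3) by rewrite lt_min r0 e3.
have [y [[w [wi /cvgdP yc]] zy]] := @denseP _ Trec z _ m0.
have [N HN] := yc _ e3.
exists (w (maxn N m)); split; first by apply: leq_trans _ (incr_ge _ wi _); exact: leq_maxr.
set l := w (maxn N m).
have h1 : d y (iter l T y) < e / 3 by apply: HN; rewrite leq_maxl.
have h2 : d (iter l T y) (iter l T z) <= e / 3.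
  rewrite dE -(iter_sub TB); apply: Hr; rewrite -dE d_sym.
  by apply: lt_le_trans zy _; rewrite ge_min lexx.
have h3 : d z y < e / 3 by apply: lt_le_trans zy _; rewrite ge_min lexx orbT.
have t1 := d_tri z y 0.
have t2 := d_tri y (iter l T y) 0.
have t3 := d_tri (iter l T y) (iter l T z) 0.
move: h1 h2 h3 t1 t2 t3; lra.
Qed.

Lemma Tinv_cont e : 0 < e -> exists2 r, 0 < r & forall z, d (T z) 0 < r -> d z 0 < e.
Proof.
move=> e0; have e4 : 0 < e / 4 by rewrite divr_gt0.
have [r r0 Hr] := EC_T _ e4; exists r => // z hz.
have [l [l1 hl]] := key z (e / 2) 1 (divr_gt0 e0 (ltr0Sn R 1)).
have := Hr _ hz l.-1; rewrite -iterSr prednK // => h.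
move: hl h; lra.
Qed.

Lemma T_inj a b : T a = T b -> a = b.
Proof.
move=> ab; apply: d_eps => e e0; have [r r0 Hr] := Tinv_cont _ e0.
by rewrite dE; apply: Hr; rewrite TB ab subrr d_refl.
Qed.

Lemma closed_range (u v : nat -> X) vv : (forall n, T (u n) = v n) ->
  (forall e, 0 < e -> exists N, forall n, (N <= n)%N -> d vv (v n) < e) ->
  exists x, T x = vv.
Proof.
move=> Tuv vc.
have [x /cvgdP xc] : exists x : X, u @ \oo --> x.
  apply: d_complete => e e0; have [r r0 Hr] := Tinv_cont _ e0.
  have [N HN] := vc _ (divr_gt0 r0 (ltr0Sn R 1)).
  exists N => m n Nm Nn; rewrite dE; apply: Hr; rewrite TB !Tuv -dE.
  have := HN m Nm; have := HN n Nn; have := d_tri (v m) vv (v n).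
  rewrite (d_sym (v m) vv); lra.
exists x; apply/esym/d_eps => e e0.
have e2 : 0 < e / 2 by rewrite divr_gt0.
have [r r0 Hr] := Dc_T x _ e2.
have [N1 HN1] := xc _ r0; have [N2 HN2] := vc _ e2.
pose n := maxn N1 N2.
have h1 : d (T x) (v n) < e / 2 by rewrite -Tuv; apply: Hr; apply: HN1; rewrite leq_maxl.
have h2 : d vv (v n) < e / 2 by apply: HN2; rewrite leq_maxr.
have := d_tri vv (v n) (T x); rewrite (d_sym (v n)); move: h1 h2; lra.
Qed.

Lemma Rec_range y : Rec T y -> exists x, T x = y.
Proof.
move=> [w [wi /cvgdP yc]].
apply: (closed_range (fun n => iter (w n).-1 T y) (fun n => iter (w n) T y)) => //.
move=> n /=; rewrite -iterS prednK //.
case: wi => w0 hw; case: n => // n; exact: leq_ltn_trans (leq0n _) (hw n).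
Qed.

Lemma T_surj v : exists x, T x = v.
Proof.
have H : forall n : nat, exists y, Rec T y /\ d v y < (n.+1%:R)^-1.
  by move=> n; apply: (@denseP _ Trec); rewrite invr_gt0 ltr0Sn.
have [y Hy] := choice H.
have H2 : forall n, exists x, T x = y n by move=> n; apply: Rec_range; case: (Hy n).
have [u Hu] := choice H2.
apply: (closed_range u y) => // e e0.
have [N HN] := small_inv _ e0; exists N => n Nn.
by case: (Hy n) => _ h; apply: lt_trans h (HN n Nn).
Qed.

Lemma iso x y : dstar d T (T x) (T y) = dstar d T x y.
Proof.
rewrite /dstar; apply/le_anti/andP; split.
- apply: ge_ereal_sup => _ [l _ <-]; apply: ereal_sup_ubound; exists l.+1 => //.
  by rewrite !iterSr.
- apply: ge_ereal_sup => _ [[|l] _ <-]; last first.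
    by apply: ereal_sup_ubound; exists l => //; rewrite !iterSr.
  apply/lee_addgt0Pr => e e0.
  have [l [l1 hl]] := key (x - y) e 1 e0.
  rewrite -dE (iter_sub TB) -dE in hl.
  apply: (@le_trans _ _ ((d (iter l T x) (iter l T y))%:E + e%:E)%E).
    by rewrite -EFinD lee_fin.
  apply: leeD2r; apply: ereal_sup_ubound; exists l.-1 => //.
  by rewrite -!iterSr prednK.
Qed.

Section Inv.
Context (S : X -> X) (TS : cancel T S) (ST : cancel S T).

Lemma SB a b : S (a - b) = S a - S b.
Proof. by apply: T_inj; rewrite TB !ST. Qed.

Lemma SZ (c : K) a : S (c *: a) = c *: S a.
Proof. by apply: T_inj; rewrite TZ !ST. Qed.

Lemma iterTS m u : iter m T (iter m S u) = u.
Proof. by elim: m u => [//|m IH] u; rewrite iterSr iterS ST IH. Qed.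

Lemma iterST m u : iter m S (iter m T u) = u.
Proof. by elim: m u => [//|m IH] u; rewrite iterSr iterS TS IH. Qed.

Lemma EC_S e : 0 < e ->
  exists2 r, 0 < r & forall u, d u 0 < r -> forall n, d (iter n S u) 0 <= e.
Proof.
move=> e0; have e2 : 0 < e / 2 by rewrite divr_gt0.
have [r r0 Hr] := EC_T _ e2; exists r => // u hu m.
have [l [ml hl]] := key (iter m S u) (e / 2) m e2.
rewrite -(subnK ml) iterD iterTS in hl.
have := Hr u hu (l - m)%N; move: hl; lra.
Qed.

Lemma transfer (f g : X -> X) : (forall m u, iter m g (iter m f u) = u) ->
  (forall a b, g (a - b) = g a - g b) ->
  (forall e, 0 < e -> exists2 r, 0 < r & forall u, d u 0 < r -> forall n, d (iter n g u) 0 <= e) ->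
  forall w x, frakL f w x -> frakL g w x.
Proof.
move=> gf gB ECg w x /cvgdP xc; apply/cvgdP => e e0.
have e2 : 0 < e / 2 by rewrite divr_gt0.
have [r r0 Hr] := ECg _ e2; have [N HN] := xc r r0.
exists N => n Nn; rewrite dE.
rewrite -{1}(gf (w n) x) -(iter_sub gB).
apply: le_lt_trans (Hr _ _ _) _; last by rewrite ltr_pdivrMr // ltr_pMr // ltr1n.
by rewrite -dE d_sym; apply: HN.
Qed.

Lemma frakL_eq w : frakL T w = frakL S w.
Proof.
apply/funext => x; apply/propext; split.
- exact: (@transfer _ _ iterST SB EC_S w x).
- exact: (@transfer _ _ iterTS TB EC_T w x).
Qed.

Lemma Rec_eq : Rec T = Rec S.
Proof.
apply/funext => x; apply/propext; rewrite /Rec /=.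
split => -[w [wi h]]; exists w; split => //.
  by rewrite -frakL_eq.
by rewrite frakL_eq.
Qed.

Lemma frakC_eq : frakC T = frakC S.
Proof.
apply/funext => w; apply/propext; rewrite /frakC /= frakL_eq //.
Qed.

Lemma Hr_eq : Hr T = Hr S.
Proof.
apply/funext => x; apply/propext; rewrite /Hr /= Rec_eq frakC_eq.
split => -[rx H]; split => // w.
  by rewrite -frakL_eq; exact: H.
by rewrite frakL_eq; exact: H.
Qed.

Lemma S_cont : continuous S.
Proof.
move=> x; apply/contdP => e e0; apply: (Dc_lin SB) => // ep ep0.
have [r r0 Hr] := EC_S _ (divr_gt0 ep0 (ltr0Sn R 1)); exists r => // u hu.
apply: le_lt_trans (Hr u hu 1%N) _; by rewrite ltr_pdivrMr // ltr_pMr // ltr1n.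
Qed.

Lemma S_pb : power_bounded S.
Proof.
move=> x U /d_top [e e0 sub].
have [r r0 Hr] := EC_S _ (divr_gt0 e0 (ltr0Sn R 1)).
have U0 : nbhs (0 : X) [set y | d 0 y < r] by apply/d_top; exists r.
have [rho rho0 Hrho] := T_pb x _ U0.
exists rho => // z hz n.
have [u' /= u'0 hx] := Hrho z hz 0%N.
exists (iter n S u'); last by rewrite /= in hx; rewrite {1}hx (iter_scale SZ).
apply: sub; rewrite /= d_sym; apply: le_lt_trans (Hr u' _ n) _.
  by rewrite d_sym.
by rewrite ltr_pdivrMr // ltr_pMr // ltr1n.
Qed.

Lemma S_rec : recurrent S.
Proof. by rewrite /recurrent -Rec_eq. Qed.

End Inv.

Lemma part1 : exists S : X -> X,
  [/\ cancel T S, cancel S T, continuous S, power_bounded S & recurrent S] /\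
  (forall x y, dstar d T (T x) (T y) = dstar d T x y).
Proof.
pose S v := projT1 (cid (T_surj v)).
have ST : cancel S T := fun v => projT2 (cid (T_surj v)).
have TS : cancel T S by move=> x; apply: T_inj; rewrite ST.
exists S; split; last exact: iso.
split => //; [exact: S_cont | exact: S_pb | exact: S_rec].
Qed.

End Rec.

Lemma part2 : hyper_recurrent T ->
  forall S : X -> X, cancel T S -> cancel S T -> Hr T = Hr S /\ hyper_recurrent S.
Proof.
move=> [Trec HrT] S TS ST.
have HE : Hr T = Hr S by apply: Hr_eq.
split => //; split; first exact: S_rec.
by rewrite -HE.
Qed.

End Main.

Theorem proposition5p1 (R : realType) (K : archiNumFieldType)
  (K_complete : complete_field K)
  (X : tvsType K) (d : X -> X -> R)
  (d_ge0 : forall x y, 0 <= d x y)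
  (d_eq0 : forall x y, d x y = 0 <-> x = y)
  (d_sym : forall x y, d x y = d y x)
  (d_tri : forall x y z, d x z <= d x y + d y z)
  (d_inv : forall x y z, d (x + z) (y + z) = d x y)
  (d_top : forall (x : X) (U : set X),
     nbhs x U <-> exists2 e : R, 0 < e & [set y | d x y < e] `<=` U)
  (d_complete : forall u : nat -> X,
     (forall e : R, 0 < e -> exists N : nat, forall m n : nat,
        (N <= m)%N -> (N <= n)%N -> d (u m) (u n) < e) ->
     exists l : X, u @ \oo --> l)
  (T : {linear X -> X}) (T_cont : continuous T)
  (T_pb : power_bounded T) :
  (recurrent T ->
     exists S : X -> X,
       [/\ cancel T S, cancel S T, continuous S,
           power_bounded S & recurrent S] /\
       (forall x y, dstar d T (T x) (T y) = dstar d T x y)) /\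
  (hyper_recurrent T ->
     forall S : X -> X, cancel T S -> cancel S T ->
       Hr T = Hr S /\ hyper_recurrent S).
Proof.
split.
- by move=> Trec; apply: part1.
- by apply: part2.
Qed.
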